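(* Let $a,b$ be real with $0<a<a+b<1$. If $a+b>1/2$ then \[ \frac{\Gamma(a+b)}{\Gamma(a+2b)}<\frac{\Gamma(1-a-b)}{\Gamma(1-a)}, \] and if $a+b<1/2$ the reverse strict inequality holds.
   Context: $\Gamma$ denotes the Euler gamma function. *)

(* Defs.v *)
From Stdlib Require Import Reals.
From Coquelicot Require Import Coquelicot.
Open Scope R_scope.

Definition Gamma (x : R) : R :=
  RInt_gen (fun t => Rpower t (x - 1) * exp (- t))
           (at_right 0) (Rbar_locally p_infty).

(* Main.v *)
Require Import Defs.
From Stdlib Require Import Reals Lra.
From Coquelicot Require Import Coquelicot.
Open Scope R_scope.

Definition G (x t : R) := Rpower t (x - 1) * exp (- t).

Lemma contG x t : 0 < t -> continuous (G x) t.
Proof.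
  intro ht. apply (ex_derive_continuous (G x)). unfold G, Rpower. auto_derive. lra.
Qed.

Lemma chasles_ge (f : R -> R) a p q b :
  (forall t, 0 < t -> continuous f t) -> (forall t, 0 < t -> 0 <= f t) ->
  0 < a -> a <= p -> p <= q -> q <= b -> RInt f p q <= RInt f a b.
Proof.
  intros Hc Hp ha hap hpq hqb.
  assert (E : forall u v, 0 < u -> u <= v -> ex_RInt f u v).
  { intros u v hu huv. apply (ex_RInt_continuous (V:=R_CompleteNormedModule)). intros z hz. apply Hc.
    rewrite Rmin_left in hz; lra. }
  rewrite <- (RInt_Chasles f a p b) by (apply E; lra).
  rewrite <- (RInt_Chasles f p q b) by (apply E; lra).
  assert (0 <= RInt f a p) by (apply RInt_ge_0; [lra|apply E; lra|intros; apply Hp; lra]).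
  assert (0 <= RInt f q b) by (apply RInt_ge_0; [lra|apply E; lra|intros; apply Hp; lra]).
  unfold plus; simpl. lra.
Qed.

Lemma pos_lim (f : R -> R) V p q :
  is_RInt_gen f (at_right 0) (Rbar_locally p_infty) V ->
  (forall t, 0 < t -> continuous f t) -> (forall t, 0 < t -> 0 <= f t) ->
  0 < p -> p <= q -> RInt f p q <= V.
Proof.
  intros H Hc Hp hp hpq.
  destruct (Rle_or_lt (RInt f p q) V) as [|Hlt]; [assumption|exfalso].
  set (c := RInt f p q) in *.
  assert (He : 0 < c - V) by lra.
  specialize (H (ball V (c - V))).
  assert (Hb : locally V (ball V (c - V))).
  { exists (mkposreal _ He). intros y hy. exact hy. }
  specialize (H Hb).
  destruct H as [Q R HQ HR HQR].
  destruct HQ as [d Hd]. destruct HR as [M HM].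
  set (a := Rmin p d / 2).
  assert (hd := cond_pos d).
  assert (ha : 0 < a) by (unfold a; apply Rmin_case; lra).
  assert (hap : a <= p) by (unfold a; generalize (Rmin_l p d); lra).
  assert (had : a < d) by (unfold a; generalize (Rmin_r p d); lra).
  set (b := Rmax q M + 1).
  assert (hqb : q <= b) by (unfold b; generalize (Rmax_l q M); lra).
  assert (hMb : M < b) by (unfold b; generalize (Rmax_r q M); lra).
  assert (HQa : Q a).
  { apply Hd; [|exact ha]. unfold ball; simpl; unfold AbsRing_ball, abs, minus, plus, opp; simpl.
    rewrite Rabs_right; lra. }
  destruct (HQR a b HQa (HM b hMb)) as [y [hy1 hy2]].
  simpl in hy1. apply (is_RInt_unique (V:=R_CompleteNormedModule)) in hy1.
  assert (c <= y). { rewrite <- hy1. apply chasles_ge; auto; lra. }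
  unfold ball in hy2; simpl in hy2; unfold AbsRing_ball, abs, minus, plus, opp in hy2; simpl in hy2.
  apply Rabs_def2 in hy2. lra.
Qed.

Lemma mono_conv (f : R -> R) B :
  (forall t, 0 < t -> continuous f t) -> (forall t, 0 < t -> 0 <= f t) ->
  (forall a b, 0 < a < 1 -> 1 < b -> RInt f a b <= B) ->
  exists L, is_RInt_gen f (at_right 0) (Rbar_locally p_infty) L.
Proof.
  intros Hc Hp HB.
  set (E := fun y => exists a b, 0 < a < 1 /\ 1 < b /\ y = RInt f a b).
  assert (Hbd : bound E).
  { exists B. intros y [a [b [h1 [h2 ->]]]]. apply HB; auto. }
  assert (Hne : exists y, E y).
  { exists (RInt f (1/2) 2). exists (1/2), 2. repeat split; lra. }
  destruct (completeness E Hbd Hne) as [L [HL1 HL2]].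
  exists L. intros P [eps HP].
  assert (he := cond_pos eps).
  assert (Hex : exists a0 b0, 0 < a0 < 1 /\ 1 < b0 /\ L - eps < RInt f a0 b0).
  { apply Classical_Prop.NNPP. intro Hn.
    assert (L <= L - eps); [|lra].
    apply HL2. intros y [a [b [h1 [h2 ->]]]].
    destruct (Rle_or_lt (RInt f a b) (L - eps)) as [|Hl]; [assumption|].
    exfalso. apply Hn. exists a, b. auto. }
  destruct Hex as [a0 [b0 [h1 [h2 h3]]]].
  apply (Filter_prod _ _ _ (fun a => 0 < a < a0) (fun b => b0 < b)).
  - exists (mkposreal _ (proj1 h1)). intros u hu hu0. split; [exact hu0|].
    unfold ball in hu; simpl in hu; unfold AbsRing_ball, abs, minus, plus, opp in hu; simpl in hu.
    apply Rabs_def2 in hu. lra.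
  - exists b0. auto.
  - intros a b ha hb. simpl. exists (RInt f a b). split.
    + apply (RInt_correct (V:=R_CompleteNormedModule)).
      apply (ex_RInt_continuous (V:=R_CompleteNormedModule)). intros z hz. apply Hc.
      rewrite Rmin_left in hz; lra.
    + apply HP. unfold ball; simpl; unfold AbsRing_ball, abs, minus, plus, opp; simpl.
      assert (RInt f a0 b0 <= RInt f a b) by (apply chasles_ge; auto; lra).
      assert (RInt f a b <= L) by (apply HL1; exists a, b; repeat split; lra).
      apply Rabs_def1; lra.
Qed.

Lemma RInt_pow x a b : x <> 0 -> 0 < a -> 0 < b ->
  is_RInt (fun t => Rpower t (x - 1)) a b ((Rpower b x - Rpower a x) / x).
Proof.
  intros hx ha hb.
  replace ((Rpower b x - Rpower a x) / x) with
    (minus ((fun t => Rpower t x / x) b) ((fun t => Rpower t x / x) a))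
    by (unfold minus, plus, opp; simpl; field; exact hx).
  apply (is_RInt_derive (V:=R_CompleteNormedModule) (fun t => Rpower t x / x)).
  - intros t ht. assert (0 < t) by (revert ht; apply Rmin_case; apply Rmax_case; intros; lra).
    unfold Rpower. auto_derive; [lra|].
    replace (x - 1) with (x + -1) by ring. rewrite Rmult_plus_distr_r, exp_plus.
    replace (-1 * ln t) with (- ln t) by ring. rewrite exp_Ropp, exp_ln by lra.
    field. split; lra.
  - intros t ht. assert (0 < t) by (revert ht; apply Rmin_case; apply Rmax_case; intros; lra).
    apply (ex_derive_continuous (fun t => Rpower t (x - 1))). unfold Rpower. auto_derive. lra.
Qed.

Lemma exp_bound k t : 0 < k -> 0 < t -> exp (- t) <= Rpower k k * Rpower t (- k).
Proof.
  intros hk ht. unfold Rpower. rewrite <- exp_plus.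
  assert (h := exp_ineq1_le (ln (t / k))).
  rewrite exp_ln in h by (apply Rdiv_lt_0_compat; lra).
  rewrite ln_div in h by lra.
  assert (k * (1 + (ln t - ln k)) <= k * (t / k)) by (apply Rmult_le_compat_l; lra).
  replace (k * (t / k)) with t in H by (field; lra).
  destruct (Rle_lt_or_eq_dec (-t) (k * ln k + - k * ln t)) as [h2|h2]; [nra| |].
  - apply Rlt_le, exp_increasing; exact h2.
  - rewrite h2; lra.
Qed.

Lemma Rpower_pos t r : 0 < Rpower t r.
Proof. unfold Rpower; apply exp_pos. Qed.

Lemma Rpower_1_l r : Rpower 1 r = 1.
Proof. unfold Rpower; rewrite ln_1, Rmult_0_r; apply exp_0. Qed.

Lemma G_nonneg x t : 0 <= G x t.
Proof. unfold G. apply Rlt_le, Rmult_lt_0_compat; [apply Rpower_pos|apply exp_pos]. Qed.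

Lemma ex_G x u v : 0 < u -> u <= v -> ex_RInt (G x) u v.
Proof.
  intros hu huv. apply (ex_RInt_continuous (V:=R_CompleteNormedModule)). intros z hz.
  apply contG. rewrite Rmin_left in hz; lra.
Qed.

Lemma G_ex x : 0 < x -> exists L, is_RInt_gen (G x) (at_right 0) (Rbar_locally p_infty) L.
Proof.
  intro hx. set (k := x + 1). set (K := Rpower k k).
  apply (mono_conv _ (1 / x + K)).
  - intros; apply contG; auto.
  - intros; apply G_nonneg.
  - intros a b [ha ha1] hb.
    rewrite <- (RInt_Chasles (G x) a 1 b) by (apply ex_G; lra).
    unfold plus; simpl.
    assert (P1 := RInt_pow x a 1 ltac:(lra) ha ltac:(lra)).
    assert (R1 : RInt (G x) a 1 <= RInt (fun t => Rpower t (x - 1)) a 1).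
    { apply RInt_le; [lra|apply ex_G; lra|eexists; exact P1|].
      intros t ht. unfold G. rewrite <- (Rmult_1_r (Rpower t (x-1))) at 2.
      apply Rmult_le_compat_l; [apply Rlt_le, Rpower_pos|].
      rewrite <- exp_0. apply Rlt_le, exp_increasing. lra. }
    rewrite (is_RInt_unique _ _ _ _ P1), Rpower_1_l in R1.
    assert (P2 := is_RInt_scal _ _ _ K _ (RInt_pow (-1) 1 b ltac:(lra) ltac:(lra) ltac:(lra))).
    cbv beta in P2.
    assert (R2 : RInt (G x) 1 b <= RInt (fun t => scal K (Rpower t (-1 - 1))) 1 b).
    { apply RInt_le; [lra|apply ex_G; lra|eexists; exact P2|].
      intros t ht. unfold G, scal; simpl; unfold mult; simpl.
      replace (-1 - 1) with ((x - 1) + - k) by (unfold k; ring).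
      rewrite Rpower_plus.
      assert (h := exp_bound k t ltac:(unfold k; lra) ltac:(lra)).
      assert (h2 := Rpower_pos t (x - 1)). fold K in h. nra. }
    assert (E2 : RInt (fun t => scal K (Rpower t (-1 - 1))) 1 b = K * ((Rpower b (-1) - Rpower 1 (-1)) / -1)).
    { apply (is_RInt_unique (V:=R_CompleteNormedModule)). exact P2. }
    rewrite E2, Rpower_1_l in R2.
    assert (h3 := Rpower_pos a x). assert (h4 := Rpower_pos b (-1)).
    assert (hK : 0 < K) by apply Rpower_pos.
    assert (Rpower b (-1) <= 1 + Rpower b (-1)) by lra.
    assert ((1 - Rpower a x) / x <= 1 / x) by (apply Rmult_le_compat_r; [apply Rlt_le, Rinv_0_lt_compat; lra|lra]).
    assert (K * ((Rpower b (-1) - 1) / -1) <= K).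
    { replace ((Rpower b (-1) - 1) / -1) with (1 - Rpower b (-1)) by (field).
      nra. }
    lra.
Qed.

Lemma Gamma_is x : 0 < x -> is_RInt_gen (G x) (at_right 0) (Rbar_locally p_infty) (Gamma x).
Proof.
  intro hx. destruct (G_ex x hx) as [L H].
  unfold Gamma. fold (G x).
  rewrite (is_RInt_gen_unique (Fa := at_right 0) (Fb := Rbar_locally p_infty) _ _ H).
  exact H.
Qed.

Lemma Gamma_pos x : 0 < x -> 0 < Gamma x.
Proof.
  intro hx.
  assert (h1 : 0 < RInt (G x) 1 2).
  { apply RInt_gt_0; [lra| |intros; apply contG; lra].
    intros t ht. unfold G. apply Rmult_lt_0_compat; [apply Rpower_pos|apply exp_pos]. }
  assert (h2 : RInt (G x) 1 2 <= Gamma x).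
  { apply pos_lim; [apply Gamma_is; auto|intros; apply contG; auto|intros; apply G_nonneg|lra|lra]. }
  lra.
Qed.

Lemma G_shift r s t : G (r + s) t = Rpower t s * G r t.
Proof. unfold G. replace (r + s - 1) with (s + (r - 1)) by ring. rewrite Rpower_plus. ring. Qed.

Lemma ext_glob (f g : R -> R) l : (forall t, f t = g t) ->
  is_RInt_gen f (at_right 0) (Rbar_locally p_infty) l ->
  is_RInt_gen g (at_right 0) (Rbar_locally p_infty) l.
Proof.
  intros E H. apply (is_RInt_gen_ext f); [|exact H].
  apply (Filter_prod _ _ _ (fun _ => True) (fun _ => True)); [apply filter_true|apply filter_true|].
  intros; apply E.
Qed.

Lemma key x y b : 0 < x -> x < y -> 0 < b -> Gamma (x + b) * Gamma y < Gamma x * Gamma (y + b).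
Proof.
  intros hx hxy hb.
  assert (gx := Gamma_pos x hx). assert (gxb := Gamma_pos (x + b) ltac:(lra)).
  assert (gy := Gamma_pos y ltac:(lra)). assert (gyb := Gamma_pos (y + b) ltac:(lra)).
  set (c := Gamma (x + b) / Gamma x).
  assert (hc : 0 < c) by (unfold c; apply Rdiv_lt_0_compat; lra).
  set (t0 := Rpower c (/ b)). set (d := y - x). set (K := Rpower t0 d).
  assert (ht0 : Rpower t0 b = c).
  { unfold t0. rewrite Rpower_mult, Rinv_l by lra. apply Rpower_1; exact hc. }
  assert (t0p : 0 < t0) by apply Rpower_pos.
  assert (hd : 0 < d) by (unfold d; lra).
  set (h := fun t => (Rpower t b - c) * (Rpower t d - K) * G x t).
  assert (H1 := Gamma_is (y + b) ltac:(lra)).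
  assert (H2 := is_RInt_gen_scal (Fa:=at_right 0) (Fb:=Rbar_locally p_infty) _ K _ (Gamma_is (x + b) ltac:(lra))).
  assert (H3 := is_RInt_gen_scal (Fa:=at_right 0) (Fb:=Rbar_locally p_infty) _ c _ (Gamma_is y ltac:(lra))).
  assert (H4 := is_RInt_gen_scal (Fa:=at_right 0) (Fb:=Rbar_locally p_infty) _ (c * K) _ (Gamma_is x hx)).
  assert (H := is_RInt_gen_plus (Fa:=at_right 0) (Fb:=Rbar_locally p_infty) _ _ _ _ (is_RInt_gen_minus (Fa:=at_right 0) (Fb:=Rbar_locally p_infty) _ _ _ _ (is_RInt_gen_minus (Fa:=at_right 0) (Fb:=Rbar_locally p_infty) _ _ _ _ H1 H2) H3) H4).
  apply (ext_glob _ h) in H.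
  2:{ intro t.
      assert (E1 : G (y + b) t = Rpower t b * Rpower t d * G x t).
      { replace (y + b) with (x + (b + d)) by (unfold d; ring). rewrite G_shift, Rpower_plus; ring. }
      assert (E3 : G y t = Rpower t d * G x t).
      { replace y with (x + d) by (unfold d; ring). apply G_shift. }
      assert (E2 : G (x + b) t = Rpower t b * G x t) by apply G_shift.
      unfold h, plus, minus, scal, opp; simpl; unfold mult, plus, opp; simpl.
      rewrite E1, E2, E3. ring. }
  set (V := plus _ _) in H.
  assert (HV : V = Gamma (y + b) - c * Gamma y).
  { unfold V, plus, minus, scal, opp; simpl; unfold mult, plus, opp; simpl.
    unfold c. field. lra. }
  assert (hcont : forall t, 0 < t -> continuous h t).
  { intros t ht. apply (ex_derive_continuous h). unfold h, G, Rpower. auto_derive. lra. }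
  assert (hsign : forall t, 0 < t -> t0 < t -> 0 < (Rpower t b - c) * (Rpower t d - K)).
  { intros t ht ht'. rewrite <- ht0. unfold K.
    assert (Rpower t0 b < Rpower t b) by (apply Rlt_Rpower_l; lra).
    assert (Rpower t0 d < Rpower t d) by (apply Rlt_Rpower_l; lra). nra. }
  assert (hnn : forall t, 0 < t -> 0 <= h t).
  { intros t ht. unfold h. apply Rmult_le_pos; [|apply G_nonneg].
    destruct (Rtotal_order t t0) as [l|[e|g]].
    - rewrite <- ht0. unfold K.
      assert (Rpower t b < Rpower t0 b) by (apply Rlt_Rpower_l; lra).
      assert (Rpower t d < Rpower t0 d) by (apply Rlt_Rpower_l; lra). nra.
    - subst t. rewrite ht0. unfold K. lra.
    - apply Rlt_le, hsign; lra. }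
  assert (hpos : 0 < RInt h (t0 + 1) (t0 + 2)).
  { apply RInt_gt_0; [lra| |intros; apply hcont; lra].
    intros t ht. unfold h. apply Rmult_lt_0_compat; [apply hsign; lra|].
    unfold G. apply Rmult_lt_0_compat; [apply Rpower_pos|apply exp_pos]. }
  assert (hle := pos_lim h V (t0 + 1) (t0 + 2) H hcont hnn ltac:(lra) ltac:(lra)).
  rewrite HV in hle.
  assert (Gamma (y + b) > c * Gamma y) by lra.
  unfold c in H0.
  apply (Rmult_lt_compat_l (Gamma x)) in H0; [|lra].
  replace (Gamma x * (Gamma (x + b) / Gamma x * Gamma y)) with (Gamma (x + b) * Gamma y) in H0
    by (field; lra).
  lra.
Qed.

Lemma div_lt_cross p q r s : 0 < q -> 0 < s -> p * s < r * q -> p / q < r / s.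
Proof.
  intros hq hs h. apply (Rmult_lt_reg_r (q * s)); [nra|].
  replace (p / q * (q * s)) with (p * s) by (field; lra).
  replace (r / s * (q * s)) with (r * q) by (field; lra). lra.
Qed.

Theorem lemma2 (a b : R) (ha : 0 < a) (hab : a < a + b) (hab1 : a + b < 1) :
  (a + b > 1/2 ->
     Gamma (a + b) / Gamma (a + 2 * b) < Gamma (1 - a - b) / Gamma (1 - a)) /\
  (a + b < 1/2 ->
     Gamma (a + b) / Gamma (a + 2 * b) > Gamma (1 - a - b) / Gamma (1 - a)).
Proof.
  assert (hb : 0 < b) by lra.
  assert (g1 := Gamma_pos (a + b) ltac:(lra)).
  assert (g2 := Gamma_pos (a + 2 * b) ltac:(lra)).
  assert (g3 := Gamma_pos (1 - a - b) ltac:(lra)).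
  assert (g4 := Gamma_pos (1 - a) ltac:(lra)).
  split; intro hs.
  - apply div_lt_cross; try lra.
    assert (k := key (1 - a - b) (a + b) b ltac:(lra) ltac:(lra) hb).
    replace (1 - a - b + b) with (1 - a) in k by ring.
    replace (a + b + b) with (a + 2 * b) in k by ring. lra.
  - apply div_lt_cross; try lra.
    assert (k := key (a + b) (1 - a - b) b ltac:(lra) ltac:(lra) hb).
    replace (1 - a - b + b) with (1 - a) in k by ring.
    replace (a + b + b) with (a + 2 * b) in k by ring. lra.
Qed.
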